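(* Let $\mathcal A$ be a cluster algebra and let $\mathcal A(\Sigma_1)\supsetneq\mathcal A(\Sigma_2)\supsetneq\cdots\supsetneq\mathcal A(\Sigma_s)$ be a strictly descending sequence of Galois-like extension subalgebras of $\mathcal A$. Then $\mathrm{Gal}_{\Sigma_1}\mathcal A<\mathrm{Gal}_{\Sigma_2}\mathcal A<\cdots<\mathrm{Gal}_{\Sigma_s}\mathcal A$ is a strictly ascending sequence of subgroups of $\mathrm{Aut}\,\mathcal A$.
   Context: $\mathrm{Aut}\,\mathcal A$: group of cluster automorphisms. Cluster subalgebras $\mathcal A(\Sigma')$ arise from mixing-type sub-seeds of seeds of $\mathcal A$. $\mathrm{Gal}_{\Sigma'}\mathcal A=\{f\in\mathrm{Aut}\,\mathcal A: f|_{\mathcal A(\Sigma')}=\mathrm{id}\}$; $\mathcal A^H=\{z\in\mathcal A: f(z)=z\ \forall f\in H\}$; $\mathcal M^H_{sub}$ is the set of cluster subalgebras $\mathcal A(\Sigma')$ maximal (under inclusion) among cluster subalgebras contained in $\mathcal A^H$ and satisfying $\mathrm{Gal}_{\Sigma'}\mathcal A=H$. A cluster subalgebra is a Galois-like extension subalgebra if it belongs to $\mathcal M^H_{sub}$ for some $H\le\mathrm{Aut}\,\mathcal A$ (necessarily $H=\mathrm{Gal}_{\Sigma'}\mathcal A$). *)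

(* Defs.v *)
From HB Require Import structures.
From mathcomp Require Import all_boot all_order all_algebra all_fingroup.
From mathcomp Require Import fraction.
From mathcomp Require Import mpoly.
Set Implicit Arguments. Unset Strict Implicit. Unset Printing Implicit Defensive.
Import GRing.Theory Num.Theory.
Local Open Scope ring_scope.

Definition ambient (m : nat) : fieldType := {fraction {mpoly int[m]}}.

(* A (labelled) seed of geometric type on the index set 'I_m:
   exchangeable indices, frozen indices, the extended cluster, and the
   extended exchange matrix (b_ij meaningful for i in ex :|: fr, j in ex). *)
Record seed (m : nat) := Seed {
  sex : {set 'I_m};
  sfr : {set 'I_m};
  sx  : 'I_m -> ambient m;
  sB  : 'I_m -> 'I_m -> int }.

Section Cluster.
Variable m : nat.
Local Notation F := (ambient m).

Definition mut_mat (B : 'I_m -> 'I_m -> int) (k : 'I_m) : 'I_m -> 'I_m -> int :=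
  fun i j => if (i == k) || (j == k) then - B i j
             else B i j + Num.sg (B i k) * Num.max (B i k * B k j) 0.

Definition mutate (S : seed m) (k : 'I_m) : seed m :=
  if k \in sex S then
    let P := \prod_(i in sex S :|: sfr S | 0 < sB S i k) sx S i ^+ absz (sB S i k) in
    let Q := \prod_(i in sex S :|: sfr S | sB S i k < 0) sx S i ^+ absz (sB S i k) in
    Seed (sex S) (sfr S)
         (fun i => if i == k then (P + Q) / sx S k else sx S i)
         (mut_mat (sB S) k)
  else S.

Definition mutate_seq (S : seed m) (ks : seq 'I_m) : seed m := foldl mutate S ks.

Definition reachable (S S' : seed m) : Prop := exists ks, S' = mutate_seq S ks.

Definition cl_generators (S : seed m) (z : F) : Prop :=
  exists ks i, i \in sex S :|: sfr S /\ z = sx (mutate_seq S ks) i.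

Definition subring_closedP (P : F -> Prop) : Prop :=
  [/\ P 1, (forall a b, P a -> P b -> P (a - b)) & (forall a b, P a -> P b -> P (a * b))].

Definition gen_ring (G : F -> Prop) (z : F) : Prop :=
  forall P, subring_closedP P -> (forall y, G y -> P y) -> P z.

Definition clust_alg (S : seed m) : F -> Prop := gen_ring (cl_generators S).

Definition init_seed (ex : {set 'I_m}) (B : 'I_m -> 'I_m -> int) : seed m :=
  Seed ex (~: ex) (fun i => FracField.tofrac ('X_i : {mpoly int[m]})) B.

Definition skew_symmetrizable (ex : {set 'I_m}) (B : 'I_m -> 'I_m -> int) : Prop :=
  exists d : 'I_m -> nat, (forall i, (0 < d i)%N) /\
    forall i j, i \in ex -> j \in ex -> (d i)%:Z * B i j = - ((d j)%:Z * B j i).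

(* mixing-type sub-seed Sigma_{I0,I1}: delete the variables in I0, freeze those in I1 *)
Definition sub_seed (S : seed m) (I0 I1 : {set 'I_m}) : seed m :=
  Seed (sex S :\: (I0 :|: I1)) ((sfr S :|: I1) :\: I0) (sx S) (sB S).

Section OverA.
Variable S0 : seed m.

Definition is_mixing_subseed (S' : seed m) : Prop :=
  exists S (I0 I1 : {set 'I_m}), [/\ reachable S0 S, [disjoint I0 & I1],
    I0 :|: I1 \subset sex S :|: sfr S & S' = sub_seed S I0 I1].

Definition subsetP' (P Q : F -> Prop) : Prop := forall z, P z -> Q z.

Definition is_cluster_subalg (S' : seed m) : Prop :=
  is_mixing_subseed S' /\ subsetP' (clust_alg S') (clust_alg S0).

(* ring automorphism of A (f is a map F -> F, only its restriction to A matters) *)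
Definition is_ring_aut (f : F -> F) : Prop :=
  let A := clust_alg S0 in
  [/\ forall z, A z -> A (f z),
      forall w, A w -> exists2 z, A z & f z = w,
      forall z w, A z -> A w -> f z = f w -> z = w,
      f 1 = 1 &
      forall z w, A z -> A w -> f (z + w) = f z + f w /\ f (z * w) = f z * f w].

Definition is_cluster_aut (f : F -> F) : Prop :=
  is_ring_aut f /\
  exists S S' (sigma : {perm 'I_m}),
    [/\ reachable S0 S /\ reachable S0 S',
        sigma @: sex S = sex S', sigma @: sfr S = sfr S',
        (forall i, i \in sex S :|: sfr S -> f (sx S i) = sx S' (sigma i)) &
        (forall k, k \in sex S ->
           f (sx (mutate S k) k) = sx (mutate S' (sigma k)) (sigma k))].

Definition Gal (S' : seed m) (f : F -> F) : Prop :=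
  is_cluster_aut f /\ forall z, clust_alg S' z -> f z = z.

Definition fixed_alg (H : (F -> F) -> Prop) (z : F) : Prop :=
  clust_alg S0 z /\ forall f, H f -> f z = z.

Definition same_group (G H : (F -> F) -> Prop) : Prop := forall f, G f <-> H f.

Definition in_Msub (H : (F -> F) -> Prop) (S' : seed m) : Prop :=
  [/\ is_cluster_subalg S',
      subsetP' (clust_alg S') (fixed_alg H),
      same_group (Gal S') H &
      forall S'', is_cluster_subalg S'' ->
        subsetP' (clust_alg S'') (fixed_alg H) ->
        same_group (Gal S'') H ->
        subsetP' (clust_alg S') (clust_alg S'') ->
        subsetP' (clust_alg S'') (clust_alg S')].

Definition galois_like (S' : seed m) : Prop :=
  exists H : (F -> F) -> Prop, (forall f, H f -> is_cluster_aut f) /\ in_Msub H S'.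

End OverA.

Definition strict_subset {T} (P Q : T -> Prop) : Prop :=
  (forall z, P z -> Q z) /\ exists z, Q z /\ ~ P z.

End Cluster.

(* Main.v *)
Require Import Defs.
From HB Require Import structures.
From mathcomp Require Import all_boot all_order all_algebra all_fingroup.
From mathcomp Require Import fraction mpoly.
From Stdlib Require Import Classical.

Theorem mainTheorem12 (m : nat) (ex : {set 'I_m}) (B : 'I_m -> 'I_m -> int)
  (hB : skew_symmetrizable ex B) (s : nat) (S : nat -> seed m) :
  (forall i, i < s -> galois_like (init_seed ex B) (S i)) ->
  (forall i, i.+1 < s -> strict_subset (clust_alg (S i.+1)) (clust_alg (S i))) ->
  forall i, i.+1 < s ->
    strict_subset (Gal (init_seed ex B) (S i)) (Gal (init_seed ex B) (S i.+1)).
Proof.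
move=> hG hS i hi.
have [sub [z [zi nzi]]] := hS i hi.
have hi' : i < s by apply: ltnW.
have [Hi [_ [csi fxi sgi maxi]]] := hG i hi'.
have [H1 [_ [cs1 fx1 sg1 max1]]] := hG i.+1 hi.
split.
  move=> f [fa ffix]; split => // w hw; exact: ffix _ (sub _ hw).
apply: NNPP => Hn.
have inc : forall f, Gal (init_seed ex B) (S i.+1) f -> Gal (init_seed ex B) (S i) f.
  move=> f hf; apply: NNPP => hnf; apply: Hn; by exists f.
have sgH : same_group (Gal (init_seed ex B) (S i)) H1.
  move=> f; split.
    move=> hf; apply/sg1; case: hf => fa ffix; split => // w hw; exact: ffix _ (sub _ hw).
  by move=> /sg1 /inc.
have := max1 (S i) csi.
have fxH : subsetP' (clust_alg (S i)) (fixed_alg (init_seed ex B) H1).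
  move=> w hw; split; first by case: csi => _ ; apply.
  move=> f /sgH [_ ffix]; exact: ffix.
by move=> /(_ fxH sgH sub) /(_ z zi).
Qed.
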